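(* Let $\mathcal{F}=(W,R)$ be a finite transitive frame and let $X_\mathcal{F}$ be constructed as described in the context. If $X_C$ is a T$_D$ space for every cluster $C$ of $\mathcal{F}$, then $X_\mathcal{F}$ is a T$_D$ space.
   Context: For a space $X$ and $Y\subseteq X$, $\mathrm{d}_X Y$ is the set of limit points of $Y$ ($x$ such that every set $O-\{x\}$, $O$ an open neighbourhood of $x$, meets $Y$). $X$ is T$_D$ if $\mathrm{d}_X\{x\}$ is closed for every $x\in X$. A subset $S$ is dense in $X$ if its closure is $X$, crowded in $X$ if $S\subseteq\mathrm{d}_XS$. A partition is dense (resp. crowded) if all its cells are dense (resp. crowded). For a transitive frame $(W,R)$: clusters are equivalence classes of $\{(x,y):x=y\text{ or }xRyRx\}$; the cluster of $x$ is degenerate if $x$ is irreflexive (then it is $\{x\}$), non-degenerate otherwise; $CRC'$ for clusters iff $xRy$ for representatives; $CR^\uparrow C'$ means $CRC'$ and not $C'RC$. Construction of $X_\mathcal{F}$: let $\mathscr{C}$ be the set of clusters of the finite transitive frame $\mathcal{F}$. For each $C\in\mathscr{C}$ choose a space $X_C$ with a partition $\{X_w:w\in C\}$: if $C=\{w\}$ is degenerate, $X_C=X_w=\{w\}$; if $C=\{w_1,\dots,w_k\}$ is non-degenerate, $X_C$ is a space with a crowded dense $k$-partition with cells labelled $X_{w_1},\dots,X_{w_k}$. The $X_C$ are pairwise disjoint. $X_\mathcal{F}=\bigcup_{C}X_C$, where $O\subseteq X_\mathcal{F}$ is open iff for every $C$, $O\cap X_C$ is open in $X_C$, and if $O\cap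 X_C\ne\emptyset$ then $X_{C'}\subseteq O$ for all $C'$ with $CR^\uparrow C'$. *)

(* Defs.v *)
From mathcomp Require Import all_boot.
From mathcomp Require Import boolp classical_sets.
Set Implicit Arguments. Unset Strict Implicit. Unset Printing Implicit Defensive.
Local Open Scope classical_set_scope.

Definition is_topology (T : Type) (A : set T) (O : set (set T)) : Prop :=
  [/\ (forall U, O U -> U `<=` A),
      O A, O set0,
      (forall (I : Type) (F : I -> set T), (forall i, O (F i)) -> O (\bigcup_i F i))
    & (forall U V, O U -> O V -> O (U `&` V))].

Definition sp_closed (T : Type) (A : set T) (O : set (set T)) (S : set T) : Prop :=
  S `<=` A /\ O (A `\` S).

Definition derived (T : Type) (A : set T) (O : set (set T)) (Y : set T) : set T :=
  [set x | A x /\ forall U, O U -> U x -> exists y, [/\ U y, y <> x & Y y]].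

Definition sp_closure (T : Type) (A : set T) (O : set (set T)) (S : set T) : set T :=
  [set x | A x /\ forall U, O U -> U x -> exists y, U y /\ S y].

Definition sp_dense (T : Type) (A : set T) (O : set (set T)) (S : set T) : Prop :=
  S `<=` A /\ sp_closure A O S = A.

Definition sp_crowded (T : Type) (A : set T) (O : set (set T)) (S : set T) : Prop :=
  S `<=` A /\ S `<=` derived A O S.

Definition TD (T : Type) (A : set T) (O : set (set T)) : Prop :=
  forall x, A x -> sp_closed A O (derived A O [set x]).

Definition same_cluster (W : eqType) (R : rel W) (x y : W) : bool :=
  (x == y) || (R x y && R y x).

(** C R^up C' for the clusters of w and v (via representatives) *)
Definition Rup (W : Type) (R : rel W) (w v : W) : bool := R w v && ~~ R v w.

(** The carrier is a type [X] with a labelling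
    [lab : X -> W]; the cell X_w is [lab @^-1` [set w]], and the cluster
    space X_C for C the cluster of w is the set [XC R lab w], with topology
    [tau w] (so [tau] must be constant on clusters). *)
Definition cell (X : Type) (W : Type) (lab : X -> W) (w : W) : set X :=
  [set x | lab x = w].

Definition XC (W : eqType) (R : rel W) (X : Type) (lab : X -> W) (w : W) : set X :=
  [set x | same_cluster R (lab x) w].

Definition XF_open (W : eqType) (R : rel W) (X : Type) (lab : X -> W)
    (tau : W -> set (set X)) (O : set X) : Prop :=
  forall w, tau w (O `&` XC R lab w) /\
    (O `&` XC R lab w <> set0 -> forall v, Rup R w v -> XC R lab v `<=` O).

Definition XF_construction (W : finType) (R : rel W) (X : Type) (lab : X -> W)
    (tau : W -> set (set X)) : Prop :=
  [/\ (forall w, is_topology (XC R lab w) (tau w)),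
      (forall w v, same_cluster R w v -> tau w = tau v),
      (* degenerate cluster {w}: X_C = X_w is a single point *)
      (forall w, ~~ R w w -> exists x : X, cell lab w = [set x])
    & (* non-degenerate cluster: {X_v : v in C} is a crowded dense partition of X_C *)
      (forall w, R w w -> forall v, same_cluster R v w ->
         [/\ cell lab v !=set0,
             sp_dense (XC R lab w) (tau w) (cell lab v)
           & sp_crowded (XC R lab w) (tau w) (cell lab v)])].

(* Main.v *)
Require Import Defs.
From mathcomp Require Import all_boot.
From mathcomp Require Import boolp classical_sets.
Set Implicit Arguments. Unset Strict Implicit.
Local Open Scope classical_set_scope.

Section Aux.
Variables (W : eqType) (R : rel W) (tr : transitive R).
Local Notation sc := (same_cluster R).

Lemma sc_refl a : sc a a.
Proof. by rewrite /same_cluster eqxx. Qed.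

Lemma sc_sym a b : sc a b -> sc b a.
Proof.
case/orP => [/eqP->|/andP[h1 h2]]; first exact: sc_refl.
by rewrite /same_cluster h1 h2 orbT.
Qed.

Lemma sc_Rl a b c : sc a b -> R a c -> R b c.
Proof. case/orP=>[/eqP->//|/andP[_ h]] hac; exact: (tr h hac). Qed.

Lemma sc_Rr a b c : sc a b -> R c a -> R c b.
Proof. case/orP=>[/eqP->//|/andP[h _]] hca; exact: (tr hca h). Qed.

Lemma sc_trans a b c : sc a b -> sc b c -> sc a c.
Proof.
move=> hab hbc; case/orP: (hab) => [/eqP->//|/andP[h1 h2]].
case/orP: (hbc) => [/eqP<-//|/andP[h3 h4]].
by rewrite /same_cluster (tr h1 h3) (tr h4 h2) orbT.
Qed.

Lemma Rup_l a a' b : sc a a' -> Rup R a b -> Rup R a' b.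
Proof.
move=> h /andP[h1 h2]; rewrite /Rup (sc_Rl h h1) /=.
apply/negP => h3; move/negP: h2; apply; exact: sc_Rr (sc_sym h) h3.
Qed.

Lemma Rup_r a b b' : sc b b' -> Rup R a b -> Rup R a b'.
Proof.
move=> h /andP[h1 h2]; rewrite /Rup (sc_Rr h h1) /=.
apply/negP => h3; move/negP: h2; apply; exact: sc_Rl (sc_sym h) h3.
Qed.

Lemma Rup_trans a b c : Rup R a b -> Rup R b c -> Rup R a c.
Proof.
move=> /andP[h1 h2] /andP[h3 h4]; rewrite /Rup (tr h1 h3) /=.
apply/negP => h5; move/negP: h4; apply; exact: (tr h5 h1).
Qed.

Lemma Rup_irr a : ~~ Rup R a a.
Proof. by rewrite /Rup; case: (R a a). Qed.

Lemma Rup_nsc a b : Rup R a b -> ~ sc a b.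
Proof. move=> h hs; move: (Rup_r (sc_sym hs) h); apply/negP; exact: Rup_irr. Qed.

End Aux.

Section Main.
Variables (W : finType) (R : rel W) (X : Type) (lab : X -> W)
    (tau : W -> set (set X)).
Hypothesis tr : transitive R.
Hypothesis hC : XF_construction R lab tau.
Local Notation sc := (same_cluster R).

Let scT a b c : sc a b -> sc b c -> sc a c := @sc_trans W R tr a b c.
Let RupR a b b' : sc b b' -> Rup R a b -> Rup R a b' := @Rup_r W R tr a b b'.
Let RupL a a' b : sc a a' -> Rup R a b -> Rup R a' b := @Rup_l W R tr a a' b.
Let RupT a b c : Rup R a b -> Rup R b c -> Rup R a c := @Rup_trans W R tr a b c.
Let RupN a b : Rup R a b -> ~ sc a b := @Rup_nsc W R tr a b.
Let scS a b : sc a b -> sc b a := @sc_sym W R a b.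

Definition Up (w : W) : set X := [set z | Rup R w (lab z)].

Lemma XC_eq w v : sc w v -> XC R lab w = XC R lab v.
Proof.
move=> h; apply/seteqP; split => z; rewrite /XC /= => hz.
  exact: scT hz h.
exact: scT hz (sc_sym h).
Qed.

Lemma top w : is_topology (XC R lab w) (tau w).
Proof. by case: hC. Qed.

Lemma tau_eq w v : sc w v -> tau w = tau v.
Proof. by case: hC => _ h _ _; apply: h. Qed.

Lemma open_up w0 U : tau w0 U -> XF_open R lab tau (U `|` Up w0).
Proof.
move=> hU.
have UX : U `<=` XC R lab w0 by case: (top w0) => h _ _ _ _; exact: h.
move=> w; split.
- have [hs|hns] := boolP (sc w w0).
    have -> : (U `|` Up w0) `&` XC R lab w = U.
      apply/seteqP; split => z.
        move=> [[//|/= hz] hzw]; exfalso.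
        exact: (RupN hz (sc_sym (scT hzw hs))).
      move=> hz; split; first by left.
      rewrite (XC_eq hs); exact: UX.
    by rewrite (tau_eq hs).
  have [hr|hnr] := boolP (Rup R w0 w).
    have -> : (U `|` Up w0) `&` XC R lab w = XC R lab w.
      apply/seteqP; split => z; first by case.
      move=> hz; split => //; right; rewrite /Up /=.
      exact: RupR (sc_sym hz) hr.
    by case: (top w).
  have -> : (U `|` Up w0) `&` XC R lab w = set0.
    apply/seteqP; split => z //= [[hz|hz] hzw].
      move/UX: hz => /= hz; move/negP: hns; apply.
      exact: scT (sc_sym hzw) hz.
    move/negP: hnr; apply; exact: RupR hzw hz.
  by case: (top w).
- move=> hne v hwv z hz.
  have [y [hy hyw]] : exists y, ((U `|` Up w0) `&` XC R lab w) y.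
    apply: contra_notP hne => hn; apply/seteqP; split => t // ht.
    by apply: hn; exists t.
  right; rewrite /Up /=.
  case: hy => [hy|hy].
    move/UX: hy => /= hy.
    have hw : sc w0 w := scT (sc_sym hy) hyw.
    exact: RupR (sc_sym hz) (RupL (sc_sym hw) hwv).
  have h1 : Rup R w0 w := RupR hyw hy.
  exact: RupR (sc_sym hz) (RupT h1 hwv).
Qed.

Lemma mainTD (hTD : forall w, TD (XC R lab w) (tau w)) : TD setT (XF_open R lab tau).
Proof.
move=> x _.
have dCX : derived (XC R lab (lab x)) (tau (lab x)) [set x] `<=` XC R lab (lab x).
  by move=> y [].
have hD : derived setT (XF_open R lab tau) [set x] =
   derived (XC R lab (lab x)) (tau (lab x)) [set x] `|` [set y | Rup R (lab y) (lab x)].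
  apply/seteqP; split => y.
  - move=> [_ hy].
    have [hs|hns] := boolP (sc (lab y) (lab x)).
    + left; split => // U hU hUy.
      have [z [hz hzy hzx]] := hy _ (open_up hU) (or_introl hUy).
      rewrite /= in hzx; subst z; exists x; split => //.
      case: hz => // /= hr.
      by move: (Rup_irr R (lab x)); rewrite hr.
    + right => /=.
      have hXy : tau (lab y) (XC R lab (lab y)) by case: (top (lab y)).
      have [z [hz hzy hzx]] := hy _ (open_up hXy) (or_introl (sc_refl R (lab y))).
      rewrite /= in hzx; subst z.
      case: hz => // hxy; exfalso; move/negP: hns; apply; exact: scS hxy.
  - case => [hy|hy]; split => // U hU hUy.
    + have [_ h] := hy.
      have [hUt _] := hU (lab x).
      have [z [[hz _] hzy hzx]] := h _ hUt (conj hUy (dCX _ hy)).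
      by exists z.
    + have [_ hup] := hU (lab y).
      have hx : U x.
        apply: (hup _ _ hy); last exact: sc_refl.
        move=> h0; have : (U `&` XC R lab (lab y)) y by split => //; exact: sc_refl.
        by rewrite h0.
      exists x; split => //.
      move=> exy; apply: (RupN hy); rewrite exy; exact: sc_refl.
rewrite hD; split => //.
set dC := derived (XC R lab (lab x)) (tau (lab x)) [set x].
move=> v; split.
- have [hs|hns] := boolP (sc v (lab x)).
    have -> : (setT `\` (dC `|` [set y | Rup R (lab y) (lab x)])) `&` XC R lab v
              = XC R lab (lab x) `\` dC.
      apply/seteqP; split => z.
        move=> [[_ hn] hz]; split; first exact: scT hz hs.
        by move=> hd; apply: hn; left.
      move=> [hz hn]; split; last exact: scT hz (scS hs).
      split => //; case => // hr; exact: (RupN hr hz).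
    rewrite (tau_eq hs).
    by have [] := hTD (lab x) x (sc_refl R (lab x)).
  have [hr|hnr] := boolP (Rup R v (lab x)).
    have -> : (setT `\` (dC `|` [set y | Rup R (lab y) (lab x)])) `&` XC R lab v = set0.
      apply/seteqP; split => z // [[_ hn] hz]; apply: hn; right.
      exact: RupL (scS hz) hr.
    by case: (top v).
  have -> : (setT `\` (dC `|` [set y | Rup R (lab y) (lab x)])) `&` XC R lab v
            = XC R lab v.
    apply/seteqP; split => z; first by case.
    move=> hz; split => //; split => //; case.
      move=> /dCX hd; move/negP: hns; apply; exact: scT (scS hz) hd.
    move=> hr; move/negP: hnr; apply; exact: RupL hz hr.
  by case: (top v).
- move=> hne u hvu y hy.
  have [z [[_ hz] hzv]] :
     exists z, ((setT `\` (dC `|` [set y | Rup R (lab y) (lab x)])) `&` XC R lab v) z.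
    apply: contra_notP hne => hn; apply/seteqP; split => t // ht.
    by apply: hn; exists t.
  split => //; case.
    move=> /dCX hd; apply: hz; right.
    have hux : sc u (lab x) := scT (scS hy) hd.
    exact: RupL (scS hzv) (RupR hux hvu).
  move=> hr; apply: hz; right.
  have hux : Rup R u (lab x) := RupL hy hr.
  exact: RupL (scS hzv) (RupT hvu hux).
Qed.

End Main.

Theorem lemma4 (W : finType) (R : rel W) (X : Type) (lab : X -> W)
    (tau : W -> set (set X)) :
  transitive R ->
  XF_construction R lab tau ->
  (forall w : W, TD (XC R lab w) (tau w)) ->
  TD setT (XF_open R lab tau).
Proof. move=> tr hC hTD; exact: mainTD. Qed.
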